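(* Let $q>3$ and $n\ge 1$. Suppose there exists a local permutation polynomial $f\in\mathbb{F}_q[x_1,\dots,x_n]$ of degree $n(q-2)$. Then, for every $1\le m\le n$, there exists a local permutation polynomial in $\mathbb{F}_q[x_1,\dots,x_m]$ of degree $m(q-2)$.
   Context: $\mathbb{F}_q$ is the finite field with $q$ elements. A polynomial $f\in\mathbb{F}_q[x_1,\dots,x_n]$ is a local permutation polynomial (LPP) if, for each $i$ and each choice of the other coordinates $(a_j)_{j\ne i}\in\mathbb{F}_q^{n-1}$, the univariate polynomial obtained by fixing $x_j=a_j$ for $j\ne i$ induces a bijection of $\mathbb{F}_q$. Polynomials are reduced (degree $<q$ in each variable), and degree means total degree. For $q>3$ any LPP in $n$ variables has degree at most $n(q-2)$, which is the ''maximum degree''. *)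

(* Defs.v *)
From mathcomp Require Import all_boot all_algebra all_field.
From mathcomp Require Import mpoly.
Set Implicit Arguments. Unset Strict Implicit. Unset Printing Implicit Defensive.
Import GRing.Theory.
Local Open Scope ring_scope.

Definition reduced (F : finFieldType) (n : nat) (p : {mpoly F[n]}) : Prop :=
  forall m, m \in msupp p -> forall i : 'I_n, (m i < #|F|)%N.

Definition is_LPP (F : finFieldType) (n : nat) (p : {mpoly F[n]}) : Prop :=
  forall (i : 'I_n) (a : 'I_n -> F),
    bijective (fun t : F => p.@[fun j => if j == i then t else a j]).

(* total degree of p (degree of 0 taken to be 0; irrelevant here) *)
Definition tdeg (F : finFieldType) (n : nat) (p : {mpoly F[n]}) : nat :=
  (msize p).-1.

(* Main.v *)
Require Import Defs.
From mathcomp Require Import all_boot all_algebra all_field.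
From mathcomp Require Import mpoly.
From mathcomp Require Import zify.

Set Implicit Arguments. Unset Strict Implicit. Unset Printing Implicit Defensive.
Import GRing.Theory.
Local Open Scope ring_scope.

Lemma card_natr0 (F : finFieldType) : #|F|%:R = 0 :> F.
Proof.
have h : \sum_(t : F) t = \sum_(t : F) (t + 1) := reindex_inj (addIr 1).
move: h; rewrite big_split /= sumr_const -[LHS]addr0 => /addrI.
by move=> h; exact: (esym h).
Qed.

Lemma card_gt1 (F : finFieldType) : (1 < #|F|)%N.
Proof. exact: finNzRing_gt1. Qed.

Lemma fermat (F : finFieldType) (x : F) : x != 0 -> x ^+ (#|F|.-1) = 1.
Proof.
move=> nx; apply: (mulIf nx); rewrite mul1r -exprSr prednK ?expf_card //.
exact: ltnW (card_gt1 F).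
Qed.

Lemma exists_nonroot (F : finFieldType) (e : nat) :
  (0 < e)%N -> (e < #|F|.-1)%N -> exists c : F, (c != 0) && (c ^+ e != 1).
Proof.
move=> e0 eq; case: (pickP (fun c : F => (c != 0) && (c ^+ e != 1))) => [c Hc | H]; first by exists c.
pose rs := enum [pred x : F | x != 0].
have := @max_unity_roots F e rs e0.
have -> : all e.-unity_root rs.
  by apply/allP => x; rewrite mem_enum => x0; rewrite unity_rootE; move: (H x) => /=; rewrite inE in x0 *; rewrite x0 /= => /negbFE.
rewrite enum_uniq => /(_ isT isT).
rewrite /rs -cardE cardC1 => h; move: eq; rewrite ltnNge.
by move: h => /= ->.
Qed.

Lemma psum_small (F : finFieldType) (e : nat) :
  (0 < e)%N -> (e < #|F|.-1)%N -> \sum_(t : F) t ^+ e = 0.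
Proof.
move=> e0 eq; have [c /andP [cn ce]] := exists_nonroot e0 eq.
have h : \sum_(t : F) t ^+ e = \sum_(t : F) (c * t) ^+ e := reindex_inj (mulfI cn).
move: h; under [in RHS]eq_bigr => t _ do rewrite exprMn.
rewrite -mulr_sumr => /eqP; rewrite -subr_eq0 -{1}[\sum_t _]mul1r -mulrBl mulf_eq0.
by rewrite subr_eq0 eq_sym (negbTE ce) => /eqP.
Qed.

Lemma psum (F : finFieldType) (e : nat) :
  (e < (#|F|.-1).*2)%N -> \sum_(t : F) t ^+ e = if e == #|F|.-1 then -1 else 0.
Proof.
move=> he; have q1 := card_gt1 F.
have q0 := card_natr0 F.
have qm1 : (#|F|.-1)%:R = -1 :> F.
  by apply/eqP; rewrite -subr_eq0 opprK -(natrD _ _ 1) addn1 prednK ?q0 // ltnW.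
case: (ltngtP e #|F|.-1) => [lt|gt|->]; last first.
- rewrite (bigD1 0) //= expr0n.
  have -> : (#|F|.-1 == 0%N) = false by case: #|F| q1 => [|[|]].
  rewrite add0r (eq_bigr (fun _ => 1)) ?sumr_const ?cardC1 ?qm1 //.
  by move=> t /fermat.
  have ee : forall t : F, t ^+ e = t ^+ (e - #|F|.-1).
    move=> t; have [->|tn] := eqVneq t 0.
      by rewrite !expr0n; case: e gt he => //= e' gt _; rewrite subn_eq0 leqNgt gt.
    by rewrite -{1}(subnK (ltnW gt)) exprD fermat // mulr1.
  under eq_bigr => t _ do rewrite ee.
  apply: psum_small; first by rewrite subn_gt0.
  by rewrite ltn_subLR ?addnn // ltnW.
- case: e lt {he} => [|e] lt.
    by rewrite (eq_bigr (fun _ => 1)) ?sumr_const //= => t _; rewrite expr0.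
  exact: psum_small.
Qed.

Definition wt (F : finFieldType) (M : nat) (t : F) : F :=
  if M == 0%N then (t == 0)%:R else t ^+ (#|F|.-1 - M).
Definition sgn (F : finFieldType) (M : nat) : F := if M == 0%N then 1 else -1.

Lemma sgn_neq0 (F : finFieldType) M : sgn F M != 0.
Proof. rewrite /sgn; case: (M == 0%N); first exact: (@oner_neq0 F). by rewrite oppr_eq0 (@oner_eq0 F). Qed.

Lemma wsum (F : finFieldType) (a M : nat) : (a < #|F|)%N -> (M < #|F|)%N ->
  \sum_(t : F) t ^+ a * wt M t = sgn F M * (a == M)%:R.
Proof.
move=> ha hM; rewrite /wt /sgn; case: eqP => [->|/eqP M0].
  rewrite mul1r (bigD1 0) //= big1 ?addr0; first by rewrite eqxx mulr1 expr0n.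
  by move=> t /negbTE ->; rewrite mulr0.
under eq_bigr => t _ do rewrite -exprD.
have q1 := card_gt1 F.
rewrite psum; last by lia.
have -> : ((a + (#|F|.-1 - M))%N == #|F|.-1) = (a == M) by apply/eqP/eqP; lia.
by case: eqP; rewrite ?mulr1 ?mulr0.
Qed.

Lemma prod_eqmnm (k : nat) (F : finFieldType) (m M : 'X_{1..k}) :
  \prod_(i < k) ((m i == M i)%:R : F) = (m == M)%:R.
Proof.
case: eqP => [->|/eqP ne]; first by rewrite big1 // => i _; rewrite eqxx.
have [i hi] : exists i, m i != M i.
  case: (pickP (fun i => m i != M i)) => [i hi|H]; first by exists i.
  by case/eqP: ne; apply/mnmP => i; move: (H i) => /= /negbFE /eqP.
by rewrite (bigD1 i) //= (negbTE hi) mul0r.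
Qed.

Lemma sum_msupp_coef (k : nat) (F : finFieldType) (p : {mpoly F[k]}) M :
  \sum_(m <- msupp p) p@_m * (m == M)%:R = p@_M.
Proof.
case: (boolP (M \in msupp p)) => hM.
  rewrite (bigD1_seq M) ?msupp_uniq //= eqxx mulr1 big1 ?addr0 // => m /negbTE ->.
  by rewrite mulr0.
rewrite big1_seq ?memN_msupp_eq0 // => m /andP [_ hm].
have -> : (m == M) = false by apply/negbTE; apply: contraNneq hM => <-.
by rewrite mulr0.
Qed.

Lemma mevalE' (F : finFieldType) (k : nat) (p : {mpoly F[k]}) (x : 'I_k -> F) :
  p.@[x] = \sum_(m <- msupp p) p@_m * \prod_i x i ^+ m i.
Proof. exact: mevalE. Qed.

Lemma CE (F : finFieldType) (k : nat) (p : {mpoly F[k]}) (M : 'X_{1..k}) :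
  reduced p -> (forall i, M i < #|F|)%N ->
  \sum_(x : {ffun 'I_k -> F}) p.@[x] * \prod_i wt (M i) (x i)
   = (\prod_i sgn F (M i)) * p@_M.
Proof.
move=> red hM.

under [in LHS]eq_bigr => x _ do rewrite mevalE' mulr_suml.
rewrite exchange_big /= -sum_msupp_coef mulr_sumr big_seq [RHS]big_seq.
apply: eq_bigr => m hm.

under eq_bigr => x _ do rewrite -mulrA -big_split.
rewrite -mulr_sumr mulrCA; congr (_ * _).
rewrite -(bigA_distr_bigA (fun i t => t ^+ m i * wt (M i) t)) /=.
have W := fun i => wsum (red _ hm i) (hM i).
under eq_bigr => i _ do rewrite W.
by rewrite big_split /= prod_eqmnm.
Qed.

Lemma sum_decomp (F : finFieldType) (I J K : finType) (comb : J -> K -> I)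
  (P : pred J) (split : I -> J * K) (G : I -> F) :
  (forall y, P (split y).1) -> (forall y, comb (split y).1 (split y).2 = y) ->
  (forall a x, P a -> split (comb a x) = (a, x)) ->
  \sum_y G y = \sum_(a | P a) \sum_x G (comb a x).
Proof.
move=> h1 h2 h3; rewrite pair_big_dep.
rewrite (reindex_onto split (fun p => comb p.1 p.2)); last first.
  by case=> a x /andP [Pa _] /=; rewrite h3.
apply: eq_big => y; first by rewrite h1 h2 eqxx.
by rewrite h2.
Qed.

Lemma sum_id0 (F : finFieldType) : (2 < #|F|)%N -> \sum_(t : F) t = 0.
Proof.
move=> q2; rewrite -[RHS](psum_small (e := 1)) //; lia.
Qed.

Lemma L1 (F : finFieldType) (k : nat) (p : {mpoly F[k]}) :
  (2 < #|F|)%N -> reduced p -> is_LPP p ->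
  forall m, m \in msupp p -> forall i, (m i < #|F|.-1)%N.
Proof.
move=> q2 red lpp m hm i; have mq := red m hm i.
suff : m i != #|F|.-1 by lia.
apply/negP => /eqP mi.
have := CE red (red m hm).
set W := \sum_ _ _.
have -> : W = 0.
  rewrite /W (@sum_decomp F _ _ _ (fun (a : {ffun 'I_k -> F}) (t : F) => [ffun j => if j == i then t else a j])
     (fun a : {ffun 'I_k -> F} => a i == 0)
     (fun y : {ffun 'I_k -> F} => ([ffun j => if j == i then 0 else y j], y i))).
  - apply: big1 => a _.
    have E : forall t, \prod_(j < k | j != i) wt (m j) ([ffun j => if j == i then t else a j] j)
        = \prod_(j < k | j != i) wt (m j) (a j).
      by move=> t; apply: eq_bigr => j /negbTE ji; rewrite ffunE ji.
    have qn0 : (#|F|.-1 == 0%N) = false by case: #|F| q2 => [|[|]].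
    under eq_bigr => t _ do rewrite (bigD1 i) //= E ffunE eqxx /wt mi qn0 subnn expr0 mul1r.
    rewrite -mulr_suml.
    rewrite (eq_bigr (fun t => p.@[fun j => if j == i then t else a j])); last first.
      by move=> t _; apply: meval_eq => j; rewrite ffunE.
    have -> : \sum_(t : F) p.@[fun j => if j == i then t else a j] = \sum_(t : F) t.
      by rewrite [RHS](reindex _ (onW_bij _ (lpp i a))).
    by rewrite sum_id0 // mul0r.
  - by move=> y /=; rewrite ffunE eqxx.
  - by move=> y /=; apply/ffunP => j; rewrite !ffunE; case: eqP => // ->.
  - move=> a x /= /eqP ai; congr (_, _); last by rewrite ffunE eqxx.
    by apply/ffunP => j; rewrite !ffunE; case: eqP => // ->.
move/esym/eqP; rewrite mulf_eq0 mcoeff_eq0 hm orbF prodf_seq_eq0.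
by case/hasP => j _ /=; rewrite (negbTE (sgn_neq0 _ _)).
Qed.

Definition ext (F : finFieldType) (m n : nat) (x : 'I_m -> F) (a : 'I_n -> F) : 'I_n -> F :=
  fun j => oapp x (a j) (insub (val j)).

Lemma ext_widen (F : finFieldType) m n (H : (m <= n)%N) (x : 'I_m -> F) (a : 'I_n -> F) i :
  ext x a (widen_ord H i) = x i.
Proof. rewrite /ext /= insubT /=; first exact: ltn_ord. move=> h; congr (x _); exact: val_inj. Qed.

Lemma ext_ge (F : finFieldType) m n (x : 'I_m -> F) (a : 'I_n -> F) (j : 'I_n) :
  ~~ (j < m)%N -> ext x a j = a j.
Proof. by move=> h; rewrite /ext insubF //; apply/negbTE. Qed.

Lemma prod_split (F : finFieldType) m n (H : (m <= n)%N) (h : 'I_n -> F) :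
  \prod_(j < n) h j = \prod_(i < m) h (widen_ord H i) * \prod_(j < n | ~~ (j < m)%N) h j.
Proof.
rewrite (bigID (fun j : 'I_n => (j < m)%N)) /=; congr (_ * _).
by rewrite (big_ord_narrow_cond (P := xpredT)).
Qed.

Definition trunc m n (H : (m <= n)%N) (mm : 'X_{1..n}) : 'X_{1..m} :=
  [multinom mm (widen_ord H i) | i < m].

Definition gdef (F : finFieldType) m n (H : (m <= n)%N) (a : 'I_n -> F) (f : {mpoly F[n]})
  : {mpoly F[m]} :=
  \sum_(mm <- msupp f)
     (f@_mm * \prod_(j < n | ~~ (j < m)%N) a j ^+ mm j) *: 'X_[trunc H mm].

Lemma geval (F : finFieldType) m n (H : (m <= n)%N) (a : 'I_n -> F) (f : {mpoly F[n]})
  (x : 'I_m -> F) : (gdef H a f).@[x] = f.@[ext x a].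
Proof.
rewrite /gdef raddf_sum /= mevalE'.
apply: eq_bigr => mm _.
rewrite mevalZ mevalX (prod_split H) -mulrA; congr (_ * _).
rewrite mulrC; congr (_ * _).
  by apply: eq_bigr => i _; rewrite ext_widen mnmE.
by apply: eq_bigr => j /ext_ge ->.
Qed.

Lemma gcoef (F : finFieldType) m n (H : (m <= n)%N) (a : 'I_n -> F) (f : {mpoly F[n]}) M :
  (gdef H a f)@_M =
  \sum_(mm <- msupp f) (f@_mm * \prod_(j < n | ~~ (j < m)%N) a j ^+ mm j) * (trunc H mm == M)%:R.
Proof.
rewrite /gdef raddf_sum /=; apply: eq_bigr => mm _.
by rewrite mcoeffZ mcoeffX.
Qed.

Lemma g_reduced (F : finFieldType) m n (H : (m <= n)%N) (a : 'I_n -> F) (f : {mpoly F[n]}) :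
  reduced f -> reduced (gdef H a f).
Proof.
move=> red M; rewrite mcoeff_msupp gcoef => nz i.
have [mm hmm /eqP tr] : exists2 mm, mm \in msupp f & trunc H mm == M.
  case: (boolP (has (fun mm => trunc H mm == M) (msupp f))) => [/hasP [mm h1 h2] | /hasPn hn].
    by exists mm.
  by move: nz; rewrite big1_seq ?eqxx // => mm /andP [_ /hn /negbTE ->]; rewrite mulr0.
by rewrite -tr mnmE; apply: red.
Qed.

Lemma g_LPP (F : finFieldType) m n (H : (m <= n)%N) (a : 'I_n -> F) (f : {mpoly F[n]}) :
  is_LPP f -> is_LPP (gdef H a f).
Proof.
move=> lpp i b.
apply: (eq_bij (lpp (widen_ord H i) (ext b a))) => t /=.
rewrite geval; apply: meval_eq => j.
rewrite /ext; case: insubP => [u hu vu|hn] /=.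
  have -> : (j == widen_ord H i) = (u == i).
    apply/eqP/eqP => [e|e]; apply: val_inj; first by rewrite vu e.
    by rewrite -vu e.
  by [].
have -> : (j == widen_ord H i) = false.
  by apply/negbTE; apply: contraNneq hn => ->; rewrite /= ltn_ord.
by [].
Qed.

Lemma deg_le (F : finFieldType) k (p : {mpoly F[k]}) :
  (2 < #|F|)%N -> reduced p -> is_LPP p ->
  forall mm, mm \in msupp p -> (mdeg mm <= k * (#|F| - 2))%N.
Proof.
move=> q2 red lpp mm hm; rewrite mdegE.
apply: (@leq_trans (\sum_(i < k) (#|F| - 2))%N).
  by apply: leq_sum => i _; have := L1 q2 red lpp hm i; lia.
by rewrite sum_nat_const card_ord.
Qed.

Lemma mdeg_const k c : mdeg [multinom c | _ < k] = (k * c)%N.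
Proof.
by rewrite mdegE (eq_bigr (fun _ => c)) ?sum_nat_const ?card_ord // => i _; rewrite mnmE.
Qed.

Theorem mainTheorem10 (F : finFieldType) (n : nat) :
  (3 < #|F|)%N -> (1 <= n)%N ->
  (exists f : {mpoly F[n]},
      reduced f /\ is_LPP f /\ tdeg f = (n * (#|F| - 2))%N) ->
  forall m : nat, (1 <= m)%N -> (m <= n)%N ->
    exists g : {mpoly F[m]},
      reduced g /\ is_LPP g /\ tdeg g = (m * (#|F| - 2))%N.
Proof.
move=> q3 n1 [f [red [lpp deg]]] m m1 mn.
have q2 : (2 < #|F|)%N by lia.
set c := (#|F| - 2)%N.
have c1 : (0 < c)%N by rewrite /c; lia.
pose Mn := [multinom c | _ < n]; pose Mm := [multinom c | _ < m].
have hs : msize f = (n * c).+1.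
  move: deg; rewrite /tdeg -/c; case: (msize f) => [|s] /=; last by move=> ->.
  by move=> h; have := muln_gt0 n c; rewrite n1 c1 -h.
have [mm hmm dmm] : exists2 mm, mm \in msupp f & mdeg mm = (n * c)%N.
  case: (boolP (has (fun mm => mdeg mm == (n * c)%N) (msupp f))) => [/hasP [mm h1 /eqP h2] | /hasPn hn].
    by exists mm.
  have : (msize f <= n * c)%N.
    rewrite msizeE; apply/bigmax_leqP_seq => mm hm _.
    have := deg_le q2 red lpp hm; have := hn mm hm; rewrite -/c => /= h1 h2; lia.
  by rewrite hs ltnn.
have eMn : mm = Mn.
  have le : forall j, (mm j <= c)%N by move=> j; have := L1 q2 red lpp hmm j; rewrite /c; lia.
  have e1 : (\sum_(j < n) mm j + \sum_(j < n) (c - mm j) = n * c)%N.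
    rewrite -big_split /= (eq_bigr (fun _ => c)) ?sum_nat_const ?card_ord //.
    by move=> j _; rewrite subnKC.
  rewrite -mdegE dmm in e1.
  have : (\sum_(j < n) (c - mm j) == 0)%N by apply/eqP; lia.
  rewrite sum_nat_eq0 => /forallP h; apply/mnmP => j; rewrite mnmE.
  by have := h j; have := le j; rewrite /= subn_eq0; lia.
have fMn : f@_Mn != 0 by rewrite -mcoeff_msupp -eMn.
have HB := CE red (M := Mn) (fun i => ltac:(rewrite mnmE /c; lia)).
have nzB : \sum_(y : {ffun 'I_n -> F}) f.@[y] * \prod_i wt (Mn i) (y i) != 0.
  by rewrite HB mulf_neq0 // prodf_seq_neq0; apply/allP => j _ /=; rewrite sgn_neq0.
rewrite (@sum_decomp F _ _ _ (fun (a : {ffun 'I_n -> F}) (x : {ffun 'I_m -> F}) => [ffun j => ext x a j])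
   (fun a : {ffun 'I_n -> F} => [forall i : 'I_m, a (widen_ord mn i) == 0])
   (fun y : {ffun 'I_n -> F} => ([ffun j : 'I_n => if (j < m)%N then 0 else y j],
                                 [ffun i : 'I_m => y (widen_ord mn i)]))) in nzB; last first.
- move=> a x /forallP P0 /=; congr (_, _); apply/ffunP => j; rewrite !ffunE.
    case: (ltnP j m) => hj; last by rewrite ext_ge // -leqNgt.
    have := P0 (Ordinal hj); have -> : widen_ord mn (Ordinal hj) = j by apply: val_inj.
    by move/eqP.
  by rewrite ext_widen.
- move=> y /=; apply/ffunP => j; rewrite ffunE /ext; case: insubP => [u _ vu|hn] /=; rewrite ffunE.
    by congr (y _); apply: val_inj.
  by rewrite (negbTE hn).
- by move=> y; apply/forallP => i /=; rewrite ffunE /= ltn_ord.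
have [a ha] : exists a : {ffun 'I_n -> F},
    \sum_(x : {ffun 'I_m -> F}) f.@[[ffun j => ext x a j]] *
          \prod_i wt (Mn i) ([ffun j => ext x a j] i) != 0.
  case: (pickP (fun a : {ffun 'I_n -> F} => \sum_(x : {ffun 'I_m -> F}) f.@[[ffun j => ext x a j]] *
          \prod_i wt (Mn i) ([ffun j => ext x a j] i) != 0)) => [a h|h]; first by exists a.
  by move: nzB; rewrite big1 ?eqxx // => a _; move: (h a) => /= /negbFE /eqP.
have hD : \sum_(x : {ffun 'I_m -> F}) f.@[ext x a] * \prod_i wt (Mm i) (x i) != 0.
  move: ha; set C := \prod_(j < n | ~~ (j < m)%N) wt c (a j).
  have -> : \sum_(x : {ffun 'I_m -> F}) f.@[[ffun j => ext x a j]] *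
          \prod_i wt (Mn i) ([ffun j => ext x a j] i) =
          (\sum_(x : {ffun 'I_m -> F}) f.@[ext x a] * \prod_i wt (Mm i) (x i)) * C.
    rewrite mulr_suml; apply: eq_bigr => x _; rewrite -mulrA; congr (_ * _).
      by apply: meval_eq => j; rewrite ffunE.
    rewrite (prod_split mn); congr (_ * _).
      by apply: eq_bigr => i _; rewrite !mnmE ffunE ext_widen.
    by apply: eq_bigr => j hj; rewrite mnmE ffunE ext_ge.
  by rewrite mulf_eq0 negb_or => /andP [].
pose g := gdef mn a f.
have gred : reduced g := g_reduced red.
have HE := CE gred (M := Mm) (fun i => ltac:(rewrite mnmE /c; lia)).
have gMm : g@_Mm != 0.
  move: hD; rewrite (eq_bigr (fun x : {ffun 'I_m -> F} => g.@[x] * \prod_i wt (Mm i) (x i))); last first.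
    by move=> x _; rewrite geval.
  by rewrite HE mulf_eq0 negb_or => /andP [].
exists g; split; first exact: gred.
split; first exact: (g_LPP mn a lpp).
rewrite /tdeg; suff -> : msize g = (m * c).+1 by [].
apply/anti_leq/andP; split.
  rewrite msizeE; apply/bigmax_leqP_seq => mm' hm' _.
  by have := deg_le q2 gred (g_LPP mn a lpp) hm'.
by rewrite -(mdeg_const m c) msize_mdeg_lt // mcoeff_msupp.
Qed.
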